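(* Let $H=(E,\{X_i:i\in[n]\})$ be a multi-hypergraph and let $t_1,\dots,t_n$ be integers with $0\le t_i\le|X_i|$. Let $\rho=\sum_{i=1}^n r_{M_i}$ where $M_i=U_{t_i,X_i}\oplus U_{0,E-X_i}$. For a positive integer $k$, define a map $\phi$ on the set of proper $k$-colorings $c:[n]\to[k]$ of the line graph $G_H$ by $\phi(c)=(N_1,\dots,N_k)$, where for each $i\in[k]$ $$N_i=\Bigl(\bigoplus_{h\,:\,c(h)=i}U_{t_h,X_h}\Bigr)\oplus U_{0,Y},\qquad Y=E-\bigcup_{h\,:\,c(h)=i}X_h.$$ Then $\phi(c)\in\Delta_\rho^k$ for every such coloring $c$. Consequently $\chi(\rho)\le\chi(G_H)$. If moreover $H$ is a hypergraph and, for all $i\in[n]$, either $t_i=1$ or $0<t_i<|X_i|$, then $\phi$ is injective.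
   Context: A polymatroid on a finite set $E$ is a function $\rho:2^E\to\mathbb{Z}$ that is normalized, non-decreasing and submodular. A multi-hypergraph is a pair $H=(E,\mathcal{E})$ with $E$ finite and $\mathcal{E}=\{X_i:i\in[n]\}$ a finite multiset of subsets of $E$; it is a hypergraph if $\mathcal{E}$ is a set of nonempty subsets. The line graph $G_H$ has vertex set $[n]=\{1,\dots,n\}$, with $ij$ an edge iff $i\ne j$ and $X_i\cap X_j\ne\emptyset$. $U_{r,X}$ denotes the rank-$r$ uniform matroid on $X$. For a polymatroid $\rho$ on $E$ and positive integer $k$, $\Delta_\rho^k$ is the set of $k$-tuples $(N_1,\dots,N_k)$ of matroids on $E$ with $\rho=r_{N_1}+\cdots+r_{N_k}$. The chromatic number $\chi(\rho)$ of $\rho$ is the least positive integer $k$ with $\Delta_\rho^k\ne\emptyset$ ($\infty$ if none). *)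

(* Defs.v *)
From Stdlib Require Import ClassicalEpsilon.
From mathcomp Require Import all_boot.

Set Implicit Arguments.
Unset Strict Implicit.
Unset Printing Implicit Defensive.

Section Defs.
Variable E : finType.

Definition decP (P : Prop) : bool :=
  if excluded_middle_informative P then true else false.

Lemma decPP (P : Prop) : decP P = true <-> P.
Proof. by rewrite /decP; case: excluded_middle_informative. Qed.

Definition normalized (rho : {set E} -> nat) : Prop := rho set0 = 0.
Definition nondecreasing (rho : {set E} -> nat) : Prop :=
  forall A B : {set E}, A \subset B -> rho A <= rho B.
Definition submodular (rho : {set E} -> nat) : Prop :=
  forall A B : {set E}, rho (A :|: B) + rho (A :&: B) <= rho A + rho B.
Definition is_polymatroid (rho : {set E} -> nat) : Prop :=
  [/\ normalized rho, nondecreasing rho & submodular rho].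

Definition is_matroid_rank (r : {set E} -> nat) : Prop :=
  [/\ forall A : {set E}, r A <= #|A|, nondecreasing r & submodular r].

(* Rank function of the uniform matroid U_{t,X} (evaluated on subsets of X). *)
Definition unif_rank (t : nat) (A : {set E}) : nat := minn t #|A|.

(* Direct sum of matroids given as (ground set, rank function) pairs whose
   ground sets partition E: r(A) = sum_j r_j (A \cap E_j). *)
Definition dsum (s : seq ({set E} * ({set E} -> nat))) (A : {set E}) : nat :=
  \sum_(p <- s) p.2 (A :&: p.1).

Definition in_Delta (rho : {set E} -> nat) (k : nat)
    (N : 'I_k -> {set E} -> nat) : Prop :=
  (forall i, is_matroid_rank (N i)) /\
  (forall A : {set E}, rho A = \sum_(i < k) N i A).

Definition Delta_nonempty (rho : {set E} -> nat) (k : nat) : Prop :=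
  exists N : 'I_k -> {set E} -> nat, in_Delta rho N.

(* chromatic number of a polymatroid: None encodes infinity *)
Definition chi_poly (rho : {set E} -> nat) : option nat :=
  match excluded_middle_informative
          (exists k, decP (0 < k /\ Delta_nonempty rho k)) with
  | left H => Some (ex_minn H)
  | right _ => None
  end.

Variable n : nat.

(* H = (E, {X_i : i in [n]}) given by X : 'I_n -> {set E} (a multiset). *)
Definition is_hypergraph (X : 'I_n -> {set E}) : Prop :=
  injective X /\ (forall i, X i != set0).

Definition lg_adj (X : 'I_n -> {set E}) (i j : 'I_n) : bool :=
  (i != j) && (X i :&: X j != set0).

Definition proper_coloring (X : 'I_n -> {set E}) (k : nat) (c : 'I_n -> 'I_k)
  : Prop := forall i j, lg_adj X i j -> c i != c j.

Definition colorable (X : 'I_n -> {set E}) (k : nat) : Prop :=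
  exists c : 'I_n -> 'I_k, proper_coloring X c.

Lemma colorable_exists (X : 'I_n -> {set E}) :
  exists k, decP (0 < k /\ colorable X k).
Proof.
exists n.+1; apply/decPP; split=> //.
exists (widen_ord (leqnSn n)) => i j /andP [ij _].
apply: contra ij => /eqP H; apply/eqP/val_inj; exact: (congr1 val H).
Qed.

Definition chi_line_graph (X : 'I_n -> {set E}) : nat :=
  ex_minn (colorable_exists X).

Definition M_rank (t : 'I_n -> nat) (X : 'I_n -> {set E}) (i : 'I_n) :=
  dsum [:: (X i, unif_rank (t i)); (~: X i, unif_rank 0)].

Definition rho_of (t : 'I_n -> nat) (X : 'I_n -> {set E}) (A : {set E}) :=
  \sum_(i < n) M_rank t X i A.

Definition phi (t : 'I_n -> nat) (X : 'I_n -> {set E}) (k : nat)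
    (c : 'I_n -> 'I_k) (i : 'I_k) : {set E} -> nat :=
  dsum ([seq (X h, unif_rank (t h)) | h <- enum 'I_n & c h == i] ++
        [:: (~: \bigcup_(h | c h == i) X h, unif_rank 0)]).

End Defs.

(* Main.v *)
Require Import Defs.
From Stdlib Require Import FunctionalExtensionality ClassicalEpsilon.
From mathcomp Require Import all_boot zify.
Set Implicit Arguments. Unset Strict Implicit. Unset Printing Implicit Defensive.

Definition NN (E : finType) n (X : 'I_n -> {set E}) (t : 'I_n -> nat) k
  (c : 'I_n -> 'I_k) (i : 'I_k) (A : {set E}) :=
  \sum_(g | c g == i) minn (t g) #|A :&: X g|.

Lemma phiE (E : finType) n (X : 'I_n -> {set E}) t k (c : 'I_n -> 'I_k) i A :
  phi t X c i A = NN X t c i A.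
Proof.
rewrite /phi /dsum big_cat /= big_cons big_nil /= /unif_rank min0n !addn0.
by rewrite big_map big_filter big_enum_cond.
Qed.

Lemma rhoE (E : finType) n (X : 'I_n -> {set E}) t A :
  rho_of t X A = \sum_h minn (t h) #|A :&: X h|.
Proof.
apply eq_bigr => h _; rewrite /M_rank /dsum !big_cons big_nil /unif_rank /=.
by rewrite min0n !addn0.
Qed.

Lemma sumNN (E : finType) n (X : 'I_n -> {set E}) t k (c : 'I_n -> 'I_k) A :
  \sum_(i < k) NN X t c i A = rho_of t X A.
Proof.
by rewrite rhoE (partition_big c xpredT).
Qed.

Lemma card_bound (E : finType) n (X : 'I_n -> {set E}) k (c : 'I_n -> 'I_k) i A :
  proper_coloring X c -> \sum_(g | c g == i) #|A :&: X g| <= #|A|.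
Proof.
move=> pc.
have -> : \sum_(g | c g == i) #|A :&: X g| =
          \sum_(e in A) #|[set g | (c g == i) && (e \in X g)]|.
  rewrite (eq_bigr (fun g => \sum_(e in A) ((e \in X g) : nat))); last first.
    move=> g _; rewrite -sum1_card big_mkcond [RHS]big_mkcond /=.
    by apply eq_bigr => e _; rewrite inE; case: (e \in A); case: (e \in X g).
  rewrite exchange_big /=; apply eq_bigr => e _.
  rewrite -sum1dep_card big_mkcond [RHS]big_mkcond /=.
  by apply eq_bigr => g _; case: (c g == i); case: (e \in X g).
rewrite -sum1_card; apply leq_sum => e _.
apply/card_le1_eqP => g g'; rewrite !inE => /andP[/eqP cg eg] /andP[/eqP cg' eg'].
apply/eqP; apply: contraT => neq.
have : lg_adj X g' g by rewrite /lg_adj neq /=; apply/set0Pn; exists e; rewrite inE eg eg'.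
by move/pc; rewrite cg cg' eqxx.
Qed.

Lemma NN_matroid (E : finType) n (X : 'I_n -> {set E}) t k (c : 'I_n -> 'I_k) i :
  proper_coloring X c -> is_matroid_rank (NN X t c i).
Proof.
move=> pc; split.
- move=> A; apply: leq_trans (card_bound i A pc); apply leq_sum => g _; exact: geq_minr.
- move=> A B sAB; apply leq_sum => g _.
  have : #|A :&: X g| <= #|B :&: X g| by apply/subset_leq_card/setSI.
  lia.
- move=> A B; rewrite /NN -!big_split /=; apply leq_sum => g _.
  have := cardsUI (A :&: X g) (B :&: X g).
  have -> : (A :&: X g) :|: (B :&: X g) = (A :|: B) :&: X g by rewrite setIUl.
  have -> : (A :&: X g) :&: (B :&: X g) = (A :&: B) :&: X g by rewrite setIACA setIid.
  have : #|(A :&: B) :&: X g| <= #|A :&: X g| by apply/subset_leq_card/setSI/subsetIl.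
  have : #|(A :&: B) :&: X g| <= #|B :&: X g| by apply/subset_leq_card/setSI/subsetIr.
  lia.
Qed.

Lemma part1 (E : finType) n (X : 'I_n -> {set E}) t k (c : 'I_n -> 'I_k) :
  proper_coloring X c -> in_Delta (rho_of t X) (phi t X c).
Proof.
move=> pc; split.
- move=> i; have -> : phi t X c i = NN X t c i.
    by apply: functional_extensionality => A; exact: phiE.
  exact: NN_matroid.
- by move=> A; rewrite -(sumNN X t c); apply eq_bigr => i _; rewrite phiE.
Qed.

Lemma part2 (E : finType) n (X : 'I_n -> {set E}) t :
  exists m, chi_poly (rho_of t X) = Some m /\ m <= chi_line_graph X.
Proof.
rewrite /chi_line_graph; case: ex_minnP => m /decPP [m0 [c pc]] _.
have Pm : Defs.decP (0 < m /\ Delta_nonempty (rho_of t X) m).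
  by apply (proj2 (decPP _)); split => //; exists (phi t X c); exact: part1.
rewrite /chi_poly; case: excluded_middle_informative => [H|[]]; last by exists m.
exists (ex_minn H); split => //.
by case: (ex_minnP H) => mm _ /(_ m Pm).
Qed.

Lemma term_ge (E : finType) (t : nat) (X B : {set E}) :
  minn t #|X| <= minn t #|B :&: X| + minn t #|~: B :&: X|.
Proof.
have := cardsID B X; rewrite setIC setDE [_ :&: ~: B]setIC; lia.
Qed.

Lemma term_eq (E : finType) (t : nat) (X B : {set E}) :
  (B :&: X == set0) || (X \subset B) ->
  minn t #|B :&: X| + minn t #|~: B :&: X| = minn t #|X|.
Proof.
have := cardsID B X; rewrite setIC setDE [_ :&: ~: B]setIC => H.
case/orP => [/eqP e | s].
  by move: H; rewrite e cards0; lia.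
by move: H; rewrite setIC (setIidPl s); lia.
Qed.

Lemma term_gt (E : finType) (t : nat) (X B : {set E}) :
  t = 1 \/ (0 < t /\ t < #|X|) ->
  B :&: X != set0 -> ~~ (X \subset B) ->
  minn t #|X| < minn t #|B :&: X| + minn t #|~: B :&: X|.
Proof.
move=> ht ne ns.
have := cardsID B X; rewrite setIC setDE [_ :&: ~: B]setIC => H.
have h1 : 0 < #|B :&: X| by rewrite card_gt0.
have h2 : 0 < #|~: B :&: X|.
  case/subsetPn: ns => x xX xB; rewrite card_gt0; apply/set0Pn; exists x.
  by rewrite !inE xX xB.
lia.
Qed.

Lemma sum_eq_each (I : finType) (P : pred I) (f h : I -> nat) :
  (forall g, P g -> h g <= f g) -> \sum_(g | P g) f g = \sum_(g | P g) h g ->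
  forall g, P g -> f g = h g.
Proof.
move=> le eq g Pg; apply/eqP; rewrite eqn_leq le // andbT.
apply: contraT; rewrite -ltnNge => lt.
move: eq; rewrite (bigD1 g Pg) [in RHS](bigD1 g Pg) /=.
have : \sum_(j | P j && (j != g)) h j <= \sum_(j | P j && (j != g)) f j.
  by apply leq_sum => j /andP[Pj _]; exact: le.
lia.
Qed.

Lemma sep (E : finType) n (X : 'I_n -> {set E}) t k (c : 'I_n -> 'I_k) h :
  proper_coloring X c ->
  NN X t c (c h) (X h) + NN X t c (c h) (~: X h) = NN X t c (c h) setT.
Proof.
move=> pc; rewrite /NN -big_split; apply eq_bigr => g /eqP cg.
rewrite setTI; apply term_eq.
case: (g =P h) => [->|ne]; first by rewrite subxx orbT.
apply/orP; left; apply: contraT => nz.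
have : lg_adj X h g by rewrite /lg_adj nz andbT; apply/eqP => e; apply: ne.
by move/pc; rewrite cg eqxx.
Qed.

Lemma sep_conv (E : finType) n (X : 'I_n -> {set E}) t k (c : 'I_n -> 'I_k) i B :
  (forall i, t i = 1 \/ (0 < t i /\ t i < #|X i|)) ->
  NN X t c i B + NN X t c i (~: B) = NN X t c i setT ->
  forall g, c g == i -> (B :&: X g == set0) || (X g \subset B).
Proof.
move=> tc; rewrite /NN -big_split /= => Heq g cg.
have hle : forall j, c j == i -> minn (t j) #|setT :&: X j| <=
    minn (t j) #|B :&: X j| + minn (t j) #|~: B :&: X j|.
  by move=> j _; rewrite setTI; exact: term_ge.
have := sum_eq_each hle Heq cg.
move=> eqg; apply: contraT; rewrite negb_or => /andP[n1 n2].
move: eqg; rewrite setTI; have := term_gt (tc g) n1 n2; lia.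
Qed.

Lemma single (E : finType) n (X : 'I_n -> {set E}) t k (c : 'I_n -> 'I_k) i e :
  0 < NN X t c i [set e] -> exists g, c g == i /\ e \in X g.
Proof.
move=> pos.
have [/existsP [g /andP[cg eg]]|/existsPn H] :=
  boolP [exists g, (c g == i) && (e \in X g)]; first by exists g.
suff Z : NN X t c i [set e] = 0 by rewrite Z in pos.
rewrite /NN; apply big1 => g cg.
have := H g; rewrite cg /= => eg.
have -> : [set e] :&: X g = set0.
  by apply/setP => x; rewrite !inE; case: eqP => // ->; rewrite (negbTE eg).
by rewrite cards0 minn0.
Qed.

Lemma single_pos (E : finType) n (X : 'I_n -> {set E}) t k (c : 'I_n -> 'I_k) g e :
  0 < t g -> e \in X g -> 0 < NN X t c (c g) [set e].
Proof.
move=> tg eg; rewrite /NN (bigD1 g) //=.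
rewrite (setIidPl _) ?sub1set // cards1; lia.
Qed.

Theorem lemma2p8 (E : finType) (n : nat) (X : 'I_n -> {set E})
    (t : 'I_n -> nat) (ht : forall i, t i <= #|X i|) :
  (forall (k : nat) (c : 'I_n -> 'I_k), 0 < k -> proper_coloring X c ->
     in_Delta (rho_of t X) (phi t X c))
  /\ (exists m, chi_poly (rho_of t X) = Some m /\ m <= chi_line_graph X)
  /\ (is_hypergraph X ->
      (forall i, t i = 1 \/ (0 < t i /\ t i < #|X i|)) ->
      forall (k : nat) (c1 c2 : 'I_n -> 'I_k),
        0 < k -> proper_coloring X c1 -> proper_coloring X c2 ->
        (forall (i : 'I_k) (A : {set E}), phi t X c1 i A = phi t X c2 i A) ->
        forall h, c1 h = c2 h).
Proof.
split; first by move=> k c _; exact: part1.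
split; first exact: part2.
move=> [injX neX] tc k c1 c2 _ pc1 pc2 Hphi h.
have HN : forall i A, NN X t c1 i A = NN X t c2 i A.
  by move=> i A; rewrite -!phiE.
have tpos : forall g, 0 < t g by move=> g; case: (tc g) => [->|[]].
have s2 : forall g, c2 g == c1 h -> (X h :&: X g == set0) || (X g \subset X h).
  apply: (sep_conv tc); rewrite -!HN; exact: sep.
case/set0Pn: (neX h) => e eh.
have := single_pos c1 (tpos h) eh; rewrite HN => /single [g [cg eg]].
have sgh : X g \subset X h.
  case/orP: (s2 g cg) => // /eqP H0.
  by have := in_set0 e; rewrite -H0 inE eh eg.
have s1 : forall g', c1 g' == c2 g -> (X g :&: X g' == set0) || (X g' \subset X g).
  apply: (sep_conv tc); rewrite !HN; exact: sep.
have shg : X h \subset X g.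
  have cg' : c1 h == c2 g by rewrite eq_sym.
  case/orP: (s1 h cg') => // /eqP H0.
  by have := in_set0 e; rewrite -H0 inE eh eg.
have egh : g = h by apply: injX; apply/eqP; rewrite eqEsubset sgh shg.
by rewrite -egh (eqP cg) egh.
Qed.
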